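(* Let $\{f(x;\theta)\}_{\theta\in\Theta}$ be an affine exponential family (defined in the context) with log-normalizer $F$. Let $p(x)=f(x;\theta)$ and $q_u(x)=f(x;\theta_u)$, $u=1,\dots,l$, be members of this family, let $w_1,\dots,w_l>0$ with $\sum_{u=1}^l w_u=1$, and let $\lambda\neq 0$ and an integer $i\geq 2$ be given. Then the power chi pseudo-distance between $p$ and the mixture $\sum_{u=1}^l w_uq_u$ is finite and given by the closed-form finite expression $$ \chi_{i,\lambda}^\pm\Big(p:\sum_{u=1}^{l} w_u q_u\Big)=\sum_{s=0}^i \binom{i}{s}(-\lambda)^{i-s}\sum_{\substack{\alpha_1+\dots+\alpha_l=s\\ \alpha_u\in\mathbb{N}\cup\{0\}}}\binom{s}{\alpha_1,\ldots,\alpha_l}\Big(\prod_{u=1}^l w_u^{\alpha_u}\Big)\exp\Big(F\Big((1-s)\theta+\sum_{u=1}^l\alpha_u\theta_u\Big)-\Big((1-s)F(\theta)+\sum_{u=1}^l\alpha_uF(\theta_u)\Big)\Big). $$ In particular, it can be computed in closed form from $F$, the parameters, the weights and $\lambda$.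
   Context: Let $\mu$ be a $\sigma$-finite positive base measure on a measurable space $\mathcal{X}$. An exponential family is a set of probability densities (w.r.t. $\mu$) of the form $f(x;\theta)=\exp(t(x)^\top\theta-F(\theta)+k(x))\,1_{\mathcal{X}}(x)$, with sufficient statistic $t:\mathcal{X}\to\mathbb{R}^D$, carrier term $k$, natural parameter $\theta$ in the natural parameter space $\Theta=\{\theta\in\mathbb{R}^D:\int \exp(t(x)^\top\theta+k(x))\,d\mu(x)<\infty\}$, and log-normalizer $F(\theta)=\log\int\exp(t(x)^\top\theta+k(x))\,d\mu(x)$. It is called an affine exponential family if its natural parameter space $\Theta$ is affine (closed under affine combinations, e.g. $\Theta=\mathbb{R}^D$), as for the Poisson, categorical, isotropic Gaussian and von Mises–Fisher families. For densities $p,r$ and $\lambda\neq0$, integer $i\ge2$, the power chi pseudo-distance is $\chi_{i,\lambda}^\pm(p:r)=\int \frac{(r(x)-\lambda p(x))^i}{p(x)^{i-1}}\,d\mu(x)$; here $(-\lambda)^j$ is the usual integer power. $\binom{s}{\alpha_1,\ldots,\alpha_l}$ denotes the multinomial coefficient. *)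

(* Defs.v *)
From HB Require Import structures.
From mathcomp Require Import all_boot all_order all_algebra.
From mathcomp Require Import all_classical all_reals all_analysis.
Set Implicit Arguments. Unset Strict Implicit. Unset Printing Implicit Defensive.
Import Order.TTheory GRing.Theory Num.Theory.
Local Open Scope classical_set_scope.
Local Open Scope ring_scope.

Definition dotv (R : realType) (D : nat) (u v : 'rV[R]_D) : R :=
  \sum_(j < D) u 0 j * v 0 j.

Definition unnorm (R : realType) (d : measure_display) (T : measurableType d)
  (D : nat) (t : T -> 'rV[R]_D) (k : T -> R) (theta : 'rV[R]_D) (x : T) : R :=
  expR (dotv (t x) theta + k x).

Definition natural_param_space (R : realType) (d : measure_display)
  (T : measurableType d) (mu : {measure set T -> \bar R})
  (D : nat) (t : T -> 'rV[R]_D) (k : T -> R) : set 'rV[R]_D :=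
  [set theta | (\int[mu]_x (unnorm t k theta x)%:E < +oo)%E].

Definition log_normalizer (R : realType) (d : measure_display)
  (T : measurableType d) (mu : {measure set T -> \bar R})
  (D : nat) (t : T -> 'rV[R]_D) (k : T -> R) (theta : 'rV[R]_D) : R :=
  ln (fine (\int[mu]_x (unnorm t k theta x)%:E)).

Definition expfam_density (R : realType) (d : measure_display)
  (T : measurableType d) (mu : {measure set T -> \bar R})
  (D : nat) (t : T -> 'rV[R]_D) (k : T -> R) (theta : 'rV[R]_D) (x : T) : R :=
  expR (dotv (t x) theta - log_normalizer mu t k theta + k x).

(* closed under (two-point, hence all finite) affine combinations *)
Definition affine_set (R : realType) (D : nat) (A : set 'rV[R]_D) : Prop :=
  forall (a : R) th1 th2, A th1 -> A th2 -> A ((1 - a) *: th1 + a *: th2).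

Definition power_chi (R : realType) (d : measure_display) (T : measurableType d)
  (mu : {measure set T -> \bar R}) (i : nat) (lam : R) (p r : T -> R) : \bar R :=
  \int[mu]_x ((r x - lam * p x) ^+ i / p x ^+ (i - 1))%:E.

Definition multinomial_coef (R : realType) (l s : nat) (alpha : 'I_l -> nat) : R :=
  (s`!)%:R / \prod_(u < l) ((alpha u)`!)%:R.

(* Main.v *)
Require Import Defs.
From HB Require Import structures.
From mathcomp Require Import all_boot all_order all_algebra.
From mathcomp Require Import all_classical all_reals all_analysis.
From mathcomp Require Import measurable_realfun.
From mathcomp Require Import ring zify.
Import Order.TTheory GRing.Theory Num.Theory.
Local Open Scope classical_set_scope.
Local Open Scope ring_scope.
Set Implicit Arguments. Unset Strict Implicit.

Definition incf l N (u : 'I_l) (a : {ffun 'I_l -> 'I_N.+1}) : {ffun 'I_l -> 'I_N.+1} :=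
  [ffun v => if v == u then inord (a v).+1 else a v].
Definition decf l N (u : 'I_l) (a : {ffun 'I_l -> 'I_N.+1}) : {ffun 'I_l -> 'I_N.+1} :=
  [ffun v => if v == u then inord (a v).-1 else a v].

Lemma decfK l N u (b : {ffun 'I_l -> 'I_N.+1}) : (0 < b u)%N -> incf u (decf u b) = b.
Proof.
move=> bu; apply/ffunP => v; rewrite !ffunE; case: eqP => [->|//].
apply/val_inj => /=.
have hb := ltn_ord (b u).
rewrite (@inordK N (b u).-1); last lia.
rewrite prednK // inordK //.
Qed.

Lemma incf_u l N u (a : {ffun 'I_l -> 'I_N.+1}) : (a u < N)%N -> (incf u a u : nat) = (a u).+1.
Proof. by move=> h; rewrite ffunE eqxx inordK. Qed.

Lemma incfK l N u (a : {ffun 'I_l -> 'I_N.+1}) : (a u < N)%N -> decf u (incf u a) = a.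
Proof.
move=> h; apply/ffunP => v; rewrite ffunE; case: eqP => [->|/eqP nv]; last by rewrite ffunE (negbTE nv).
apply/val_inj => /=; rewrite incf_u // inordK //=; lia.
Qed.

Lemma incf_over l N u (a : {ffun 'I_l -> 'I_N.+1}) : (N <= a u)%N -> (incf u a u : nat) = 0%N.
Proof.
move=> h; rewrite ffunE eqxx /inord /insubd insubF //=.
by apply/negbTE; rewrite -leqNgt; have := ltn_ord (a u); lia.
Qed.

Lemma le_sum_u l N u (a : {ffun 'I_l -> 'I_N.+1}) : (a u <= \sum_v (a v : nat))%N.
Proof. by rewrite (bigD1 u) //= leq_addr. Qed.

Lemma sum_incf l N u (a : {ffun 'I_l -> 'I_N.+1}) : (a u < N)%N ->
  (\sum_v (incf u a v : nat) = (\sum_v (a v : nat)).+1)%N.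
Proof.
move=> h; rewrite (bigD1 u) //= [in RHS](bigD1 u) //= incf_u // addSn; congr (_.+1 + _)%N.
by apply: eq_bigr => v nv; rewrite ffunE (negbTE nv).
Qed.

Lemma prod_incf (R : realType) l N u (a : {ffun 'I_l -> 'I_N.+1}) (F : 'I_l -> nat -> R) :
  (a u < N)%N ->
  \prod_v F v (incf u a v) = F u (a u).+1 * \prod_(v | v != u) F v (a v).
Proof.
move=> h; rewrite (bigD1 u) //= incf_u //; congr (_ * _).
by apply: eq_bigr => v nv; rewrite ffunE (negbTE nv).
Qed.

Lemma multinomial_exp (R : realType) l N (y : 'I_l -> R) s : (s <= N)%N ->
  (\sum_u y u) ^+ s = \sum_(a : {ffun 'I_l -> 'I_N.+1} | (\sum_u (a u : nat))%N == s)
      multinomial_coef R s (fun u => (a u : nat)) * \prod_u y u ^+ a u.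
Proof.
elim: s => [_|s IH hs].
  rewrite expr0 (big_pred1 [ffun => ord0]); last first.
    move=> a /=; rewrite sum_nat_eq0; apply/forallP/eqP => [H|->].
      by apply/ffunP => v; rewrite ffunE; apply/val_inj; exact/eqP/H.
    by move=> v; rewrite ffunE.
  rewrite /multinomial_coef; under eq_bigr do rewrite ffunE.
  rewrite [X in _ / X]big1 ?divr1 ?mul1r; last by move=> v _; rewrite ffunE. by rewrite big1. 
rewrite exprS (IH (ltnW hs)) big_distrl /=.
under eq_bigr do rewrite big_distrr /=.
under [RHS]eq_bigr => b Hb.
  rewrite (_ : multinomial_coef R s.+1 (fun u => (b u : nat)) =
     \sum_u (b u : nat)%:R * (s`!%:R / \prod_v ((b v : nat)`!)%:R)); last first.
    rewrite -big_distrl /= -natr_sum (eqP Hb) /multinomial_coef factS natrM mulrA //.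
  rewrite big_distrl /=.
over.
rewrite [RHS]exchange_big /=; apply: eq_bigr => u _.
rewrite [RHS](bigID (fun b : {ffun 'I_l -> 'I_N.+1} => (0 < b u)%N)) /=.
rewrite [X in _ = _ + X]big1 ?addr0; last first.
  by move=> b /andP[_]; rewrite lt0n negbK => /eqP ->; rewrite !mul0r.
rewrite [RHS](reindex_onto (incf u) (decf u)) /=; last by move=> b /andP[_ ?]; exact: decfK.
apply: eq_big => a.
  case: (ltnP (a u) N) => hau.
    by rewrite sum_incf // incf_u // incfK // eqxx andbT eqSS ltn0Sn andbT.
  rewrite incf_over //= andbF; apply/negbTE.
  apply/eqP => E; have := le_sum_u u a; rewrite E; move: hs hau; clear; lia.
move=> /eqP Ha.
have hau : (a u < N)%N by have := le_sum_u u a; rewrite Ha; move: hs; clear; lia.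
rewrite incf_u // (@prod_incf R l N u a (fun v n => (n`!)%:R)) // (@prod_incf R l N u a (fun v n => y v ^+ n)) //.
rewrite /multinomial_coef (bigD1 u) //= [X in _ * (_ * X)](bigD1 u) //=.
rewrite factS natrM exprS.
have h1 : ((a u).+1%:R : R) != 0 by rewrite pnatr_eq0.
have h2 : (((a u)`!)%:R : R) != 0 by rewrite pnatr_eq0 -lt0n fact_gt0.
have h3 : (\prod_(v | v != u) (((a v : nat)`!)%:R : R)) != 0.
  by rewrite prodf_seq_neq0; apply/allP => v _; apply/implyP => _; rewrite pnatr_eq0 -lt0n fact_gt0.
field.
by rewrite h3 h2 [1 + _]addrC natr1 h1.
Qed.

Lemma dotvD (R : realType) D (u v w : 'rV[R]_D) : dotv u (v + w) = dotv u v + dotv u w.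
Proof. by rewrite /dotv -big_split; apply: eq_bigr => j _; rewrite mxE mulrDr. Qed.
Lemma dotvZ (R : realType) D (u v : 'rV[R]_D) c : dotv u (c *: v) = c * dotv u v.
Proof. by rewrite /dotv mulr_sumr; apply: eq_bigr => j _; rewrite mxE mulrCA. Qed.
Lemma dotv0 (R : realType) D (u : 'rV[R]_D) : dotv u 0 = 0.
Proof. by rewrite /dotv big1 // => j _; rewrite mxE mulr0. Qed.
Lemma dotv_sum (R : realType) D (u : 'rV[R]_D) I (r : seq I) (f : I -> 'rV[R]_D) :
  dotv u (\sum_(j <- r) f j) = \sum_(j <- r) dotv u (f j).
Proof. exact: (big_morph _ (dotvD u) (dotv0 u)). Qed.

Lemma unnorm_meas (R : realType) d (T : measurableType d) D (t : T -> 'rV[R]_D) k th :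
  (forall j : 'I_D, measurable_fun setT (fun x => t x 0 j)) -> measurable_fun setT k ->
  measurable_fun setT (unnorm t k th).
Proof.
move=> mt mk; rewrite /unnorm; apply: measurableT_comp; first exact: measurable_realfun.measurable_expR.
apply: measurable_realfun.measurable_funD => //; rewrite /dotv.
apply: measurable_sum => j; apply: measurable_realfun.measurable_funM => //; exact: measurable_cst.
Qed.

Lemma unnorm_int_gt0 (R : realType) d (T : measurableType d) (mu : {measure set T -> \bar R})
  D (t : T -> 'rV[R]_D) k th :
  (0 < mu setT)%E ->
  (forall j : 'I_D, measurable_fun setT (fun x => t x 0 j)) -> measurable_fun setT k ->
  (0 < \int[mu]_x (unnorm t k th x)%:E)%E.
Proof.
move=> mu0 mt mk.
have mU := unnorm_meas th mt mk.
have ge0 : (0 <= \int[mu]_x (unnorm t k th x)%:E)%E.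
  by apply: integral_ge0 => x _; rewrite lee_fin ltW // expR_gt0.
rewrite lt_neqAle ge0 andbT; apply/negP => /eqP /esym I0.
have : (\int[mu]_(x in setT) `|(unnorm t k th x)%:E| = 0)%E.
  by rewrite -I0; apply: eq_integral => x _; rewrite gee0_abs // lee_fin ltW // expR_gt0.
have mE : measurable_fun setT (EFin \o unnorm t k th).
  exact/measurable_realfun.measurable_EFinP.
move/(ae_eq_integral_abs mu measurableT mE) => -[A [mA muA0 sub]].
have sT : setT `<=` A.
  move=> x _; apply: sub => /= H.
  have := H I; move=> [] /eqP; rewrite gt_eqF // expR_gt0 //.
have := subset_measure0 measurableT mA sT muA0.
by move=> h; move: mu0; rewrite h ltxx.
Qed.

Lemma unnorm_intE (R : realType) d (T : measurableType d) (mu : {measure set T -> \bar R})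
  D (t : T -> 'rV[R]_D) k th :
  (0 < mu setT)%E ->
  (forall j : 'I_D, measurable_fun setT (fun x => t x 0 j)) -> measurable_fun setT k ->
  natural_param_space mu t k th ->
  (\int[mu]_x (unnorm t k th x)%:E = (expR (log_normalizer mu t k th))%:E)%E.
Proof.
move=> mu0 mt mk hth.
have gt0 := unnorm_int_gt0 th mu0 mt mk.
rewrite /natural_param_space /= in hth.
rewrite /log_normalizer lnK; last first.
  by rewrite posrE fine_gt0 // gt0 hth.
rewrite fineK // ge0_fin_numE ?hth // ltW //.
Qed.

Lemma unnorm_integrable (R : realType) d (T : measurableType d) (mu : {measure set T -> \bar R})
  D (t : T -> 'rV[R]_D) k th :
  (forall j : 'I_D, measurable_fun setT (fun x => t x 0 j)) -> measurable_fun setT k ->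
  natural_param_space mu t k th ->
  mu.-integrable setT (fun x => (unnorm t k th x)%:E).
Proof.
move=> mt mk hth; apply/integrableP; split.
  exact/measurable_EFinP/unnorm_meas.
rewrite (eq_integral (fun x => (unnorm t k th x)%:E)) //.
by move=> x _; rewrite gee0_abs // lee_fin ltW // expR_gt0.
Qed.

Lemma aff_seq (R : realType) D (A : set 'rV[R]_D) (I : Type) th (ths : I -> 'rV[R]_D) :
  affine_set A -> A th -> (forall u, A (ths u)) ->
  forall (c : I -> R) (sq : seq I), A (th + \sum_(u <- sq) c u *: (ths u - th)).
Proof.
move=> aff hth hths c; elim=> [|h sq IH].
  by rewrite big_nil addr0.
rewrite big_cons.
set S := \sum_(u <- sq) _ in IH *.
have hz := aff (c h) _ _ hth (hths h).
have hm := aff (2^-1) _ _ IH hz.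
have := aff 2 _ _ hth hm.
congr A; apply/rowP => j; rewrite !mxE.
by field.
Qed.

Lemma key_real (R : realType) l (d0 F0 kx : R) (du Fu : 'I_l -> R) i s (a : 'I_l -> nat) :
  (\sum_u a u)%N = s -> (s <= i)%N -> (1 <= i)%N ->
  \prod_u expR (du u - Fu u + kx) ^+ a u *
   (expR (d0 - F0 + kx) ^+ (i - s) / expR (d0 - F0 + kx) ^+ (i - 1))
  = expR (- ((1 - s%:R) * F0 + \sum_u (a u)%:R * Fu u)) *
    expR ((1 - s%:R) * d0 + \sum_u (a u)%:R * du u + kx).
Proof.
move=> Ha hs hi.
rewrite -(expRM_natl (i - s)) -(expRM_natl (i - 1)) -expRB.
under eq_bigr => u _ do rewrite -(expRM_natl (a u)).
rewrite -expR_sum -!expRD; congr expR.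
rewrite !natrB //.
have -> : \sum_u (a u)%:R * (du u - Fu u + kx) =
  \sum_u (a u)%:R * du u - \sum_u (a u)%:R * Fu u + s%:R * kx.
  rewrite -Ha natr_sum mulr_suml -sumrB -big_split /=; apply: eq_bigr => u _; ring.
ring.
Qed.

Lemma key_pw (R : realType) d (T : measurableType d) (mu : {measure set T -> \bar R})
  D (t : T -> 'rV[R]_D) k l th (ths : 'I_l -> 'rV[R]_D) (x : T) i s (a : 'I_l -> nat) :
  (\sum_u a u)%N = s -> (s <= i)%N -> (1 <= i)%N ->
  \prod_u expfam_density mu t k (ths u) x ^+ a u *
   (expfam_density mu t k th x ^+ (i - s) / expfam_density mu t k th x ^+ (i - 1))
  = expR (- ((1 - s%:R) * log_normalizer mu t k th
             + \sum_u (a u)%:R * log_normalizer mu t k (ths u))) *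
    unnorm t k ((1 - s%:R) *: th + \sum_u (a u)%:R *: ths u) x.
Proof.
move=> Ha hs hi.
have -> : unnorm t k ((1 - s%:R) *: th + \sum_u (a u)%:R *: ths u) x =
   expR ((1 - s%:R) * dotv (t x) th + \sum_u (a u)%:R * dotv (t x) (ths u) + k x).
  rewrite /unnorm dotvD dotvZ dotv_sum; congr (expR (_ + _ + _)).
  by apply: eq_bigr => u _; exact: dotvZ.
exact: key_real.
Qed.
Lemma pw_abs (R : realType) l i (lam P : R) (w q : 'I_l -> R) (V : nat -> ('I_l -> nat) -> R) :
  (forall s (a : 'I_l -> nat), (\sum_u a u)%N = s -> (s <= i)%N ->
     \prod_u q u ^+ a u * (P ^+ (i - s) / P ^+ (i - 1)) = V s a) ->
  ((\sum_u w u * q u) - lam * P) ^+ i / P ^+ (i - 1) =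
  \sum_(s < i.+1) \sum_(a : {ffun 'I_l -> 'I_s.+1} | (\sum_u (a u : nat))%N == s)
     'C(i, s)%:R * (- lam) ^+ (i - s) *
       (multinomial_coef R s (fun u => (a u : nat)) * \prod_u w u ^+ a u * V s (fun u => a u)).
Proof.
move=> hpw.
rewrite addrC -mulNr exprDn mulr_suml; apply: eq_bigr => s _.
have hs' : (s <= i)%N by rewrite -ltnS.
rewrite (multinomial_exp _ (leqnn s)) -mulr_natl exprMn.
set S := \sum_(a | _) _.
have -> : 'C(i, s)%:R * ((- lam) ^+ (i - s) * P ^+ (i - s) * S) / P ^+ (i - 1) =
     'C(i, s)%:R * (- lam) ^+ (i - s) * (S * (P ^+ (i - s) / P ^+ (i - 1))) by ring.
rewrite /S big_distrl big_distrr /=; apply: eq_bigr => a /eqP Ha.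
under eq_bigr do rewrite exprMn.
rewrite big_split /= -(hpw s (fun u => a u) Ha hs').
by rewrite !mulrA.
Qed.

Lemma main_abs (R : realType) d (T : measurableType d) (mu : {measure set T -> \bar R})
  l i (lam : R) (w : 'I_l -> R) (q : 'I_l -> T -> R) (P : T -> R)
  (V : nat -> ('I_l -> nat) -> T -> R) (e : nat -> ('I_l -> nat) -> R) :
  (forall s (a : 'I_l -> nat), (\sum_u a u)%N = s -> (s <= i)%N ->
     mu.-integrable setT (fun x => (V s a x)%:E) /\
     (\int[mu]_x (V s a x)%:E = (e s a)%:E)%E) ->
  (forall x s (a : 'I_l -> nat), (\sum_u a u)%N = s -> (s <= i)%N ->
     \prod_u q u x ^+ a u * (P x ^+ (i - s) / P x ^+ (i - 1)) = V s a x) ->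
  mu.-integrable setT
    (fun x => (((\sum_u w u * q u x) - lam * P x) ^+ i / P x ^+ (i - 1))%:E) /\
  (\int[mu]_x (((\sum_u w u * q u x) - lam * P x) ^+ i / P x ^+ (i - 1))%:E =
  (\sum_(s < i.+1) 'C(i, s)%:R * (- lam) ^+ (i - s) *
     \sum_(a : {ffun 'I_l -> 'I_s.+1} | (\sum_u (a u : nat))%N == s)
        multinomial_coef R s (fun u => (a u : nat)) * (\prod_u w u ^+ a u) *
        e s (fun u => a u))%:E)%E.
Proof.
move=> hV hpw.
pose c (s : 'I_i.+1) (a : {ffun 'I_l -> 'I_s.+1}) : R := 'C(i, s)%:R * (- lam) ^+ (i - s) *
  (multinomial_coef R s (fun u => (a u : nat)) * \prod_u w u ^+ a u).
pose g (s : 'I_i.+1) (a : {ffun 'I_l -> 'I_s.+1}) (x : T) : \bar R :=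
  if (\sum_u (a u : nat))%N == s then ((c s a)%:E * (V s (fun u => a u) x)%:E)%E else 0%E.
have hs' : forall s : 'I_i.+1, (s <= i)%N by move=> s; rewrite -ltnS.
have gint : forall s a, mu.-integrable setT (g s a).
  move=> s a; rewrite /g; case: (boolP ((\sum_u (a u : nat))%N == s)) => [/eqP Ha|_].
    by apply: integrableZl => //; exact: (hV _ _ Ha (hs' s)).1.
  by apply: (eq_integrable measurableT (cst 0%E)) => //; exact: integrable0.
have eqf : forall x,
   ((((\sum_u w u * q u x) - lam * P x) ^+ i / P x ^+ (i - 1))%:E =
    \sum_(s < i.+1) \sum_(a : {ffun 'I_l -> 'I_s.+1}) g s a x)%E.
  move=> x; rewrite (@pw_abs R l i lam (P x) w (fun u => q u x) (fun s a => V s a x)); last by move=> s a Ha hs; exact: hpw.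
  rewrite -sumEFin; apply: eq_bigr => s _; rewrite big_mkcond -sumEFin /=.
  apply: eq_bigr => a _; rewrite /g; case: ifP => _ //.
  by rewrite -EFinM /c !mulrA.
split.
  apply: (eq_integrable measurableT (fun x => \sum_(s < i.+1) \sum_(a : {ffun 'I_l -> 'I_s.+1}) g s a x)%E).
    by move=> x _; rewrite eqf.
  by apply: (integrable_sum measurableT) => s _; apply: (integrable_sum measurableT) => a _; exact: gint.
rewrite (eq_integral (fun x => \sum_(s < i.+1) \sum_(a : {ffun 'I_l -> 'I_s.+1}) g s a x)%E); last first.
  by move=> x _; rewrite eqf.
rewrite integral_sum //; last by move=> s; apply: (integrable_sum measurableT) => a _; exact: gint.
rewrite -sumEFin; apply: eq_bigr => s _.
rewrite integral_sum //.
rewrite big_distrr /= -sumEFin [RHS]big_mkcond /=; apply: eq_bigr => a _; rewrite /g.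
case: (boolP ((\sum_u (a u : nat))%N == s)) => [/eqP Ha|_].
  rewrite integralZl //; last exact: (hV _ _ Ha (hs' s)).1.
  by rewrite (hV _ _ Ha (hs' s)).2 -EFinM /c !mulrA.
by rewrite (eq_integral (cst 0%E)) ?integral0.
Qed.

Unset Implicit Arguments.

Theorem theorem1 (R : realType) (d : measure_display) (T : measurableType d)
  (mu : {measure set T -> \bar R}) (D : nat) (t : T -> 'rV[R]_D) (k : T -> R)
  (l : nat) (theta : 'rV[R]_D) (thetas : 'I_l -> 'rV[R]_D) (w : 'I_l -> R)
  (lam : R) (i : nat) :
  sigma_finite setT mu ->
  (0 < mu setT)%E ->
  (forall j : 'I_D, measurable_fun setT (fun x => t x 0 j)) ->
  measurable_fun setT k ->
  affine_set (natural_param_space mu t k) ->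
  natural_param_space mu t k theta ->
  (forall u, natural_param_space mu t k (thetas u)) ->
  (forall u, 0 < w u) -> \sum_(u < l) w u = 1 ->
  lam != 0 -> (2 <= i)%N ->
  let F := log_normalizer mu t k in
  let p := expfam_density mu t k theta in
  let r := fun x => \sum_(u < l) w u * expfam_density mu t k (thetas u) x in
  mu.-integrable setT (fun x => ((r x - lam * p x) ^+ i / p x ^+ (i - 1))%:E) /\
  power_chi mu i lam p r =
  (\sum_(s < i.+1) 'C(i, s)%:R * (- lam) ^+ (i - s) *
     \sum_(a : {ffun 'I_l -> 'I_s.+1} | (\sum_(u < l) (a u : nat))%N == s)
        multinomial_coef R s (fun u => (a u : nat)) *
        (\prod_(u < l) w u ^+ a u) *
        expR (F ((1 - s%:R) *: theta + \sum_(u < l) (a u)%:R *: thetas u)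
              - ((1 - s%:R) * F theta + \sum_(u < l) (a u)%:R * F (thetas u))))%:E.
Proof.
move=> _ mu0 mt mk aff hth hths _ _ _ hi F p r.
have i1 : (1 <= i)%N by apply: ltnW.
pose th' (s : nat) (a : 'I_l -> nat) := (1 - s%:R) *: theta + \sum_u (a u)%:R *: thetas u.
pose B (s : nat) (a : 'I_l -> nat) := (1 - s%:R) * F theta + \sum_u (a u)%:R * F (thetas u).
have hTh : forall s (a : 'I_l -> nat), (\sum_u a u)%N = s ->
    natural_param_space mu t k (th' s a).
  move=> s a Ha.
  have -> : th' s a = theta + \sum_u (a u)%:R *: (thetas u - theta).
    rewrite /th'.
    have -> : \sum_u (a u)%:R *: (thetas u - theta) =
        \sum_u (a u)%:R *: thetas u - s%:R *: theta.
      rewrite -Ha natr_sum scaler_suml -sumrB; apply: eq_bigr => u _; exact: scalerBr.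
    by rewrite scalerBl scale1r addrA addrAC.
  exact: aff_seq.
have H := @main_abs R d T mu l i lam w (fun u x => expfam_density mu t k (thetas u) x) p
   (fun s a x => expR (- B s a) * unnorm t k (th' s a) x)
   (fun s a => expR (F (th' s a) - B s a)).
apply: H.
- move=> s a Ha hs.
  have hU : mu.-integrable setT (fun x => (unnorm t k (th' s a) x)%:E).
    by apply: unnorm_integrable => //; exact: hTh.
  split.
    apply: (eq_integrable measurableT
      (fun x => ((expR (- B s a))%:E * (unnorm t k (th' s a) x)%:E)%E)).
      by move=> x _; rewrite EFinM.
    exact: integrableZl.
  rewrite (eq_integral (fun x => ((expR (- B s a))%:E * (unnorm t k (th' s a) x)%:E)%E)); last first.
    by move=> x _; rewrite EFinM.
  rewrite integralZl // (unnorm_intE mu0 mt mk (hTh _ _ Ha)) -EFinM -expRD.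
  by rewrite [- B s a + _]addrC.
- move=> x s a Ha hs; exact: key_pw.
Qed.
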